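(* Let $\rho,\sigma$ be commuting quantum states on a $d$-dimensional Hilbert space with $\sigma$ full-rank, and let $1>\epsilon>0$. Let $\rho^\epsilon_{\mathrm{st}}$ and $\rho^\epsilon_{\mathrm{fl}}$ be the $\epsilon$-steep and $\epsilon$-flat approximations of $\rho$ relative to $\sigma$. Then for all $x\in[0,1]$, $$\mathcal L_{\rho^\epsilon_{\mathrm{st}}|\sigma}(x)\ge \ell_{r_{\mathrm{st}}}(x),\quad r_{\mathrm{st}}=2^{S(\rho\|\sigma)-f_\sigma(\rho,\epsilon)},\qquad \mathcal L_{\rho^\epsilon_{\mathrm{fl}}|\sigma}(x)\le \ell_{r_{\mathrm{fl}}}(x),\quad r_{\mathrm{fl}}=2^{S(\rho\|\sigma)+f_\sigma(\rho,\epsilon)},$$ where $f_\sigma(\rho,\epsilon):=\sqrt{V(\rho\|\sigma)(\epsilon^{-1}-1)}$ and $\ell_c(x)=\min(c\,x,1)$.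
   Context: Logs are base 2; $S(\rho\|\sigma)=\mathrm{Tr}(\rho(\log\rho-\log\sigma))$, $V(\rho\|\sigma)=\mathrm{Tr}(\rho(\log\rho-\log\sigma)^2)-S(\rho\|\sigma)^2$, $D(\rho,\tau)=\frac12\|\rho-\tau\|_1$. Write $\sigma=\sum_i s_i|i\rangle\langle i|$, $\rho=\sum_i p_i|i\rangle\langle i|$ in a common eigenbasis ordered so that $p_i/s_i\ge p_{i+1}/s_{i+1}$. For a state $\tau=\sum_i t_i|i\rangle\langle i|$ diagonal in this basis, the Lorenz curve $\mathcal L_{\tau|\sigma}:[0,1]\to[0,1]$ is the piecewise linear curve connecting the points $(\sum_{i\le k}s_{\pi(i)},\sum_{i\le k}t_{\pi(i)})$, $k=0,\dots,d$, where $\pi$ orders the indices so that $t_{\pi(i)}/s_{\pi(i)}$ is non-increasing (it is concave). Flat approximation $\rho^\epsilon_{\mathrm{fl}}=\sum_i\bar p_i|i\rangle\langle i|$: if $D(\rho,\sigma)<\epsilon$ set $\bar p_i=s_i$; otherwise let $M\in\{1,\dots,d-1\}$ be the smallest integer with $\epsilon\le\sum_{i=1}^M p_i-\frac{p_{M+1}}{s_{M+1}}\sum_{i=1}^M s_i$, let $N\in\{2,\dots,d\}$ be the largest integer with $\epsilon\le\frac{p_{N-1}}{s_{N-1}}\sum_{i=N}^d s_i-\sum_{i=N}^d p_i$ (these exist and $M\le N$), and set $\bar p_i=s_i\frac{(\sum_{j=1}^M p_j)-\epsilon}{\sum_{j=1}^M s_j}$ for $i\le M$, $\bar p_i=s_i\frac{(\sum_{j=N}^d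 p_j)+\epsilon}{\sum_{j=N}^d s_j}$ for $i\ge N$, and $\bar p_i=p_i$ otherwise. Steep approximation $\rho^\epsilon_{\mathrm{st}}=\sum_i\hat p_i|i\rangle\langle i|$: if $\epsilon\le 1-p_1$, let $R\in\{2,\dots,d\}$ be the largest index with $\sum_{i=R}^d p_i\ge\epsilon$, $r=\sum_{i=R+1}^d p_i$, and set $\hat p_1=p_1+\epsilon$, $\hat p_i=p_i$ for $1<i<R$, $\hat p_R=p_R-(\epsilon-r)$, $\hat p_i=0$ for $i>R$; if $\epsilon>1-p_1$, set $\hat p_1=1$ and $\hat p_i=0$ for $i>1$. *)

(* Defs.v *)
From HB Require Import structures.
From mathcomp Require Import all_boot all_order all_algebra.
From mathcomp Require Import all_classical all_reals all_analysis.
Set Implicit Arguments. Unset Strict Implicit. Unset Printing Implicit Defensive.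
Import Order.TTheory GRing.Theory Num.Theory.
Local Open Scope ring_scope.

(* Conventions: states rho, sigma commute, so they are diagonal in a common
   eigenbasis |1>,...,|d>.  They are represented by their eigenvalue lists
   p, s : nat -> R, where only the entries with indices 1..d are relevant
   (1-indexed exactly as in the paper).  *)

Section Defs.
Variable R : realType.

Definition log2 (x : R) : R := ln x / ln 2.

Definition sum_to (f : nat -> R) (m : nat) : R := \sum_(1 <= i < m.+1) f i.
Definition sum_from (d : nat) (f : nat -> R) (n : nat) : R := \sum_(n <= i < d.+1) f i.

Definition relent (d : nat) (p s : nat -> R) : R :=
  \sum_(1 <= i < d.+1) (if p i == 0 then 0 else p i * (log2 (p i) - log2 (s i))).

Definition relvar (d : nat) (p s : nat -> R) : R :=
  \sum_(1 <= i < d.+1) (if p i == 0 then 0 else p i * (log2 (p i) - log2 (s i)) ^+ 2)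
  - (relent d p s) ^+ 2.

Definition trdist (d : nat) (p s : nat -> R) : R :=
  2^-1 * \sum_(1 <= i < d.+1) `|p i - s i|.

Definition fsig (d : nat) (p s : nat -> R) (eps : R) : R :=
  Num.sqrt (relvar d p s * (eps^-1 - 1)).

Definition ell (c x : R) : R := Num.min (c * x) 1.

Definition condM (p s : nat -> R) (eps : R) (m : nat) : bool :=
  eps <= sum_to p m - p m.+1 / s m.+1 * sum_to s m.
Definition condN (d : nat) (p s : nat -> R) (eps : R) (n : nat) : bool :=
  eps <= p n.-1 / s n.-1 * sum_from d s n - sum_from d p n.
Definition flatM (d : nat) (p s : nat -> R) (eps : R) : nat :=
  head 0%N [seq m <- iota 1 d.-1 | condM p s eps m].
Definition flatN (d : nat) (p s : nat -> R) (eps : R) : nat :=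
  last 0%N [seq n <- iota 2 d.-1 | condN d p s eps n].

Definition flat (d : nat) (p s : nat -> R) (eps : R) (i : nat) : R :=
  if trdist d p s < eps then s i else
  let M := flatM d p s eps in
  let N := flatN d p s eps in
  if (i <= M)%N then s i * ((sum_to p M - eps) / sum_to s M)
  else if (N <= i)%N then s i * ((sum_from d p N + eps) / sum_from d s N)
  else p i.

Definition steepR (d : nat) (p : nat -> R) (eps : R) : nat :=
  last 0%N [seq r <- iota 2 d.-1 | eps <= sum_from d p r].

Definition steep (d : nat) (p : nat -> R) (eps : R) (i : nat) : R :=
  if eps <= 1 - p 1%N then
    let Rr := steepR d p eps in
    let r := sum_from d p Rr.+1 in
    if i == 1%N then p 1%N + eps
    else if (i < Rr)%N then p i
    else if i == Rr then p Rr - (eps - r)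
    else 0
  else (if i == 1%N then 1 else 0).

Definition perm_on_1d (d : nat) (pi : nat -> nat) : Prop :=
  (forall i, (1 <= i <= d)%N -> (1 <= pi i <= d)%N) /\
  (forall i j, (1 <= i <= d)%N -> (1 <= j <= d)%N -> pi i = pi j -> i = j).

Definition lorenz_order (d : nat) (t s : nat -> R) (pi : nat -> nat) : Prop :=
  perm_on_1d d pi /\
  (forall i, (1 <= i < d)%N -> t (pi i.+1) / s (pi i.+1) <= t (pi i) / s (pi i)).

Definition lorX (s : nat -> R) (pi : nat -> nat) (k : nat) : R :=
  \sum_(1 <= i < k.+1) s (pi i).
Definition lorY (t : nat -> R) (pi : nat -> nat) (k : nat) : R :=
  \sum_(1 <= i < k.+1) t (pi i).

(* index k of the segment [X_k, X_{k+1}] containing x (k in 0..d-1) *)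
Definition lorseg (d : nat) (s : nat -> R) (pi : nat -> nat) (x : R) : nat :=
  (\sum_(1 <= j < d) nat_of_bool (lorX s pi j <= x)%R)%N.

Definition lorenz (d : nat) (t s : nat -> R) (pi : nat -> nat) (x : R) : R :=
  let k := lorseg d s pi x in
  lorY t pi k + (lorY t pi k.+1 - lorY t pi k) / (lorX s pi k.+1 - lorX s pi k)
                * (x - lorX s pi k).

End Defs.

(* Main.v *)
Require Import Defs.
From HB Require Import structures.
From mathcomp Require Import all_boot all_order all_algebra.
From mathcomp Require Import all_classical all_reals all_analysis.
From mathcomp Require Import zify ring lra.
Import Order.TTheory GRing.Theory Num.Theory.
Local Open Scope ring_scope.

Ltac clear_non_nat := repeat match goal with
  | H : ?T |- _ =>
    let P := type of T in
    lazymatch P with Prop =>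
      lazymatch T with
      | is_true (leq _ _) => fail
      | is_true (andb (leq _ _) (leq _ _)) => fail
      | @eq nat _ _ => fail
      | is_true (negb (@eq_op Datatypes_nat__canonical__eqtype_Equality _ _)) => fail
      | is_true (@eq_op Datatypes_nat__canonical__eqtype_Equality _ _) => fail
      | _ => clear H
      end
    end
  end.
Ltac slia := clear_non_nat; lia.

Section Aux.
Variable R : realType.
Implicit Types (u v w F : nat -> R).

Lemma term_le_sum F a b i : (forall j, (a <= j < b)%N -> 0 <= F j) ->
  (a <= i < b)%N -> F i <= \sum_(a <= j < b) F j.
Proof.
move=> F0 /andP[ai ib].
rewrite (@big_cat_nat _ _ _ i) //=; last exact: ltnW.
rewrite (big_ltn ib) /= addrCA -[X in X <= _]addr0 lerD2l.
apply: addr_ge0; rewrite big_seq_cond; apply: sumr_ge0 => j /andP[];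
  rewrite mem_index_iota => /andP[] aj jb _; apply: F0; slia.
Qed.

Definition Xs v k := \sum_(1 <= i < k.+1) v i.

Lemma Xs0 v : Xs v 0 = 0.
Proof. by rewrite /Xs big_geq. Qed.

Lemma XsS v k : Xs v k.+1 = Xs v k + v k.+1.
Proof. by rewrite /Xs big_nat_recr. Qed.


Lemma sum_ge0_range F a b : (forall j, (a <= j < b)%N -> 0 <= F j) ->
  0 <= \sum_(a <= j < b) F j.
Proof.
move=> H; rewrite big_seq_cond; apply: sumr_ge0 => j /andP[].
by rewrite mem_index_iota => /H.
Qed.

Lemma ler_sum_range F G a b : (forall j, (a <= j < b)%N -> F j <= G j) ->
  \sum_(a <= j < b) F j <= \sum_(a <= j < b) G j.
Proof.
move=> H; rewrite big_seq_cond [X in _ <= X]big_seq_cond.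
by apply: ler_sum => j /andP[]; rewrite mem_index_iota => /H.
Qed.

Lemma eq_sum_range F G a b : (forall j, (a <= j < b)%N -> F j = G j) ->
  \sum_(a <= j < b) F j = \sum_(a <= j < b) G j.
Proof.
move=> H; rewrite big_seq_cond [X in _ = X]big_seq_cond.
by apply: eq_bigr => j /andP[]; rewrite mem_index_iota => /H.
Qed.

Arguments eq_sum_range {F G a b}.
Arguments ler_sum_range {F G a b}.
Arguments sum_ge0_range {F a b}.
Arguments term_le_sum {F a b i}.

Lemma Xs_mono v d a b : (forall i, (1 <= i <= d)%N -> 0 <= v i) ->
  (a <= b <= d)%N -> Xs v a <= Xs v b.
Proof.
move=> v0 /andP[ab bd]; elim: b ab bd => [|b IH] ab bd.
  by move: ab; rewrite leqn0 => /eqP->.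
move: ab; rewrite leq_eqVlt => /orP[/eqP->//|]; rewrite ltnS => ab.
rewrite XsS (le_trans (IH ab (ltnW bd))) // lerDl v0 //; slia.
Qed.
Arguments Xs_mono {v d a b}.

Lemma seg_aux v d x : (forall i, (1 <= i <= d)%N -> 0 <= v i) -> 0 <= x ->
  forall n, (1 <= n <= d)%N ->
  let k := (\sum_(1 <= j < n) nat_of_bool (Xs v j <= x)%R)%N in
  (k < n)%N /\ Xs v k <= x /\ ((k.+1 < n)%N -> x < Xs v k.+1).
Proof.
move=> v0 x0; elim=> [//|n IH] /andP[n1 nd] /=.
case: (posnP n) => [->|n0].
  by rewrite big_geq // Xs0.
have [k1 [k2 k3]] := IH (ltac:(slia)).
rewrite big_nat_recr //=.
set k := (\sum_(1 <= j < n) nat_of_bool (Xs v j <= x)%R)%N in k1 k2 k3 *; clearbody k.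
case: (boolP (Xs v n <= x)) => Hn /=.
- have kn : k.+1 = n.
    apply/eqP; rewrite eqn_leq k1 /= leqNgt; apply/negP => kn.
    have H1 : Xs v k.+1 <= Xs v n by apply: (Xs_mono v0); slia.
    by have := k3 kn; rewrite ltNge (le_trans H1 Hn).
  by rewrite addn1 kn; split => //; split => //; slia.
- rewrite addn0; split; first slia; split => // kn.
  case: (ltnP k.+1 n) => kn'; first exact: k3.
  have -> : k.+1 = n by slia.
  by rewrite ltNge.
Qed.

Lemma seg v d x : (1 <= d)%N -> (forall i, (1 <= i <= d)%N -> 0 <= v i) ->
  Xs v d = 1 -> 0 <= x <= 1 ->
  let k := (\sum_(1 <= j < d) nat_of_bool (Xs v j <= x)%R)%N in
  (k < d)%N /\ Xs v k <= x /\ x <= Xs v k.+1.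
Proof.
move=> d1 v0 vd /andP[x0 x1] /=.
have [k1 [k2 k3]] := @seg_aux v d x v0 x0 d (ltac:(slia)).
move: k1 k2 k3; set k := (\sum_(1 <= j < d) _)%N => k1 k2 k3; clearbody k.
split => //; split => //.
case: (ltnP k.+1 d) => kd; first exact/ltW/k3.
have -> : k.+1 = d by slia.
by rewrite vd.
Qed.


Definition Lval u v k x :=
  Xs u k + (Xs u k.+1 - Xs u k) / (Xs v k.+1 - Xs v k) * (x - Xs v k).

Lemma XsB v k : Xs v k.+1 - Xs v k = v k.+1.
Proof. by rewrite XsS addrAC subrr add0r. Qed.

Lemma Xs_le u v k : (forall i, (1 <= i <= k)%N -> u i <= v i) -> Xs u k <= Xs v k.
Proof. by move=> H; apply: ler_sum_range => j jk; apply: H; slia. Qed.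
Arguments Xs_le {u v k}.

Lemma XsZ c v k : Xs (fun i => c * v i) k = c * Xs v k.
Proof. by rewrite /Xs mulr_sumr. Qed.

Lemma lor_upper u v d c x : (1 <= d)%N ->
  (forall i, (1 <= i <= d)%N -> 0 < v i) -> Xs v d = 1 ->
  (forall i, (1 <= i <= d)%N -> 0 <= u i) -> Xs u d = 1 ->
  (forall i, (1 <= i <= d)%N -> u i <= c * v i) -> 0 <= x <= 1 ->
  Lval u v (\sum_(1 <= j < d) nat_of_bool (Xs v j <= x)%R)%N x <= Num.min (c * x) 1.
Proof.
move=> d1 v0 vd u0 ud uc x01.
have v0' : forall i, (1 <= i <= d)%N -> 0 <= v i by move=> i /v0/ltW.
have [k1 [k2 k3]] := @seg v d x d1 v0' vd x01.
move: k1 k2 k3; set k := (\sum_(1 <= j < d) _)%N => k1 k2 k3; clearbody k.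
rewrite /Lval !XsB.
have b0 : 0 < v k.+1 by apply: v0; slia.
have a0 : 0 <= u k.+1 by apply: u0; slia.
have ab : u k.+1 / v k.+1 <= c by rewrite ler_pdivrMr //; apply: uc; slia.
have t0 : 0 <= x - Xs v k by rewrite subr_ge0.
have tb : x - Xs v k <= v k.+1 by rewrite lerBlDl -XsS.
rewrite le_min; apply/andP; split.
- have Hk : Xs u k <= c * Xs v k.
    by rewrite -XsZ; apply: Xs_le => i ik; apply: uc; slia.
  have := ler_wpM2r t0 ab => H.
  have -> : c * x = c * Xs v k + c * (x - Xs v k) by ring.
  exact: lerD.
- have H : u k.+1 / v k.+1 * (x - Xs v k) <= u k.+1.
    have := ler_wpM2l (divr_ge0 a0 (ltW b0)) tb.
    by rewrite divfK // gt_eqF.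
  have H2 : Xs u k.+1 <= Xs u d by apply: (Xs_mono u0); slia.
  by rewrite XsS ud in H2; lra.
Qed.


Lemma exists_last (P : pred nat) lo hi : (exists j, (lo <= j <= hi)%N /\ P j) ->
  exists m, [/\ (lo <= m <= hi)%N, P m & forall j, (m < j <= hi)%N -> ~~ P j].
Proof.
elim: hi => [|hi IH] [j [jr Pj]].
  exists j; split => // i; slia.
case: (boolP (P hi.+1)) => H.
  exists hi.+1; split => //; [slia | move=> i; slia].
have [|m [m1 m2 m3]] := IH.
  exists j; split => //; move: jr => /andP[a b]; rewrite a /=.
  rewrite leq_eqVlt in b; case/orP: b => [/eqP ej|]; last by [].
  by rewrite ej (negbTE H) in Pj.
exists m; split => //; first slia.
move=> i /andP[mi ih]; case: (ltnP i hi.+1) => ih'.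
  apply: m3; slia.
by have -> : i = hi.+1 by slia.
Qed.

Lemma sorted_trans u v d : (forall i, (1 <= i < d)%N -> u i.+1 / v i.+1 <= u i / v i) ->
  forall a b, (1 <= a <= b)%N -> (b <= d)%N -> u b / v b <= u a / v a.
Proof.
move=> H a; elim=> [|b IH] ab bd; first slia.
case: (ltnP a b.+1) => ab'; last by have -> : a = b.+1 by slia.
apply: le_trans (IH (ltac:(slia)) (ltnW bd)); apply: H; slia.
Qed.
Arguments sorted_trans {u v d} H {a b}.

Lemma lor_lower u v w d c x : (1 <= d)%N ->
  (forall i, (1 <= i <= d)%N -> 0 < v i) -> Xs v d = 1 ->
  (forall i, (1 <= i <= d)%N -> 0 <= u i) -> Xs u d = 1 ->
  (forall i, (1 <= i < d)%N -> u i.+1 / v i.+1 <= u i / v i) ->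
  (forall i, (1 <= i <= d)%N -> 0 <= w i) -> Xs w d = 1 -> 0 < c ->
  (forall i, (1 <= i <= d)%N -> 0 < u i -> c * v i <= w i) -> 0 <= x <= 1 ->
  Num.min (c * x) 1 <= Lval u v (\sum_(1 <= j < d) nat_of_bool (Xs v j <= x)%R)%N x.
Proof.
move=> d1 v0 vd u0 ud srt w0 wd c0 uw x01.
have v0' : forall i, (1 <= i <= d)%N -> 0 <= v i by move=> i /v0/ltW.
have cross : forall a b, (1 <= a <= b)%N -> (b <= d)%N -> u b * v a <= u a * v b.
  move=> a b ab bd; have := sorted_trans srt ab bd.
  have va : 0 < v a by apply: v0; slia.
  have vb : 0 < v b by apply: v0; slia.
  rewrite ler_pdivrMr // mulrAC ler_pdivlMr //.
have [|m [m1 m2 m3]] := @exists_last (fun i => 0 < u i) 1 d.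
  apply/not_existsP => /= H.
  have : Xs u d = 0.
    rewrite /Xs (eq_sum_range (G := fun=> 0)) ?big1_eq // => j jd.
    apply/eqP; rewrite eq_le u0 ?andbT; last slia.
    by rewrite leNgt; apply/negP => Hj; apply: (H j); split => //; slia.
  by rewrite ud => /eqP; rewrite oner_eq0.
have upos : forall i, (1 <= i <= m)%N -> 0 < u i.
  move=> i im; have := sorted_trans srt im (ltac:(slia)).
  have vm : 0 < v m by apply: v0; slia.
  have vi : 0 < v i by apply: v0; slia.
  move=> H; have : 0 < u i / v i by apply: lt_le_trans H; rewrite divr_gt0.
  by rewrite pmulr_lgt0 ?invr_gt0.
have uzero : forall i, (m < i <= d)%N -> u i = 0.
  move=> i im; apply/eqP; rewrite eq_le u0 ?andbT; last slia.
  by rewrite leNgt m3.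
have um : Xs u m = 1.
  rewrite -ud /Xs (@big_cat_nat _ _ _ m.+1 1 d.+1) //=; last slia.
  rewrite [X in _ = _ + X](eq_sum_range (G := fun=> 0)) ?big1_eq ?addr0 // => j jd.
have A0 : 0 < Xs v m.
  case: m m1 {m2 m3 upos uzero um} => [|m] m1; first slia.
  rewrite XsS ltr_wpDl //; last by apply: v0; slia.
  by apply: sum_ge0_range => j jm; apply: v0'; slia.
have cA : c * Xs v m <= 1.
  rewrite -XsZ -wd (le_trans (Xs_le (v := w) _)) //.
    by move=> i im; apply: uw; [slia | apply: upos].
  by apply: (Xs_mono w0); slia.
have pref : forall j n, (j <= n <= d)%N -> Xs v j * Xs u n <= Xs u j * Xs v n.
  move=> j; elim=> [|n IH] jn.
    by have -> : j = 0%N by [slia]; rewrite mulrC.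
  case: (ltnP j n.+1) => jn'; last by have -> : j = n.+1 by [slia]; rewrite mulrC.
  have := IH (ltac:(slia)); rewrite !XsS !mulrDr => H.
  apply: lerD => //; rewrite /Xs mulr_suml mulr_suml.
  apply: ler_sum_range => a ha; rewrite mulrC; apply: cross; slia.
have v0'' := v0'.
have [k1 [k2 k3]] := @seg v d x d1 v0' vd x01.
move: k1 k2 k3; set k := (\sum_(1 <= j < d) _)%N => k1 k2 k3; clearbody k.
rewrite /Lval !XsB.
have b0 : 0 < v k.+1 by apply: v0; slia.
have a0 : 0 <= u k.+1 by apply: u0; slia.
case: (ltnP k m) => km; last first.
  have -> : u k.+1 = 0 by apply: uzero; slia.
  have -> : Xs u k = 1.
    apply/eqP; rewrite eq_le -{1}ud (Xs_mono u0) /=; last slia.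
    by rewrite -{1}um (Xs_mono u0) //; slia.
  by rewrite mul0r mul0r addr0 ge_min lexx orbT.
set t := x - Xs v k.
have t0 : 0 <= t by rewrite subr_ge0.
have tb : t <= v k.+1 by rewrite lerBlDl -XsS.
set lam := t / v k.+1.
have lam0 : 0 <= lam by rewrite divr_ge0 // ltW.
have lam1 : lam <= 1 by rewrite ler_pdivrMr // mul1r.
have tE : t = lam * v k.+1 by rewrite /lam divfK // gt_eqF.
have aE : u k.+1 / v k.+1 * t = lam * u k.+1 by rewrite /lam mulrAC [in RHS]mulrC mulrA.
rewrite aE.
have P1 := pref k m (ltac:(slia)); rewrite um mulr1 in P1.
have P2 := pref k.+1 m (ltac:(slia)); rewrite um mulr1 !XsS in P2.
have Yk0 : 0 <= Xs u k by apply: sum_ge0_range => j jk; apply: u0; slia.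
have H1 : 0 <= (1 - lam) * (Xs u k * Xs v m - Xs v k).
  by apply: mulr_ge0; rewrite subr_ge0.
have H2 : 0 <= lam * ((Xs u k + u k.+1) * Xs v m - (Xs v k + v k.+1)).
  by apply: mulr_ge0; rewrite // subr_ge0.
have xE : x = Xs v k + t by rewrite /t addrC subrK.
have HL : x <= (Xs u k + lam * u k.+1) * Xs v m.
  rewrite xE tE; lra.
have L0 : 0 <= Xs u k + lam * u k.+1 by apply: addr_ge0 => //; apply: mulr_ge0.
rewrite ge_min; apply/orP; left.
have x0 : 0 <= x by case/andP: x01.
have := ler_wpM2l (ltW c0) HL; rewrite mulrCA => H3.
apply: le_trans H3 _.
by rewrite -[X in _ <= X]mulr1; apply: ler_wpM2l.
Qed.

End Aux.
Arguments Xs {R}.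
Arguments Lval {R}.
Arguments eq_sum_range {R F G a b}.
Arguments ler_sum_range {R F G a b}.
Arguments sum_ge0_range {R F a b}.
Arguments term_le_sum {R F a b i}.
Arguments Xs_mono {R v d a b}.
Arguments Xs_le {R u v k}.
Arguments sorted_trans {R u v d} H {a b}.

Section B.
Variable R : realType.
Implicit Types (u v w F : nat -> R).

Lemma sum_perm F d pi : perm_on_1d d pi ->
  \sum_(1 <= i < d.+1) F (pi i) = \sum_(1 <= i < d.+1) F i.
Proof.
move=> [pr pinj].
rewrite -(big_map pi xpredT F).
apply: perm_big.
have U : uniq (map pi (index_iota 1 d.+1)).
  rewrite map_inj_in_uniq ?iota_uniq // => a b.
  rewrite !mem_index_iota => ha hb; apply: pinj; slia.
have Sub : {subset map pi (index_iota 1 d.+1) <= index_iota 1 d.+1}.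
  move=> x /mapP[y]; rewrite !mem_index_iota => hy ->.
  have := pr y; slia.
have [_ E] := uniq_min_size U Sub (ltac:(by rewrite size_map)).
by apply: uniq_perm => //; apply: iota_uniq.
Qed.


Lemma cantelli_fin w Y d eps V : (forall i, (1 <= i <= d)%N -> 0 <= w i) ->
  \sum_(1 <= i < d.+1) w i = 1 -> \sum_(1 <= i < d.+1) w i * Y i = 0 ->
  V = \sum_(1 <= i < d.+1) w i * Y i ^+ 2 -> 0 < eps -> eps < 1 ->
  \sum_(1 <= i < d.+1) (if Num.sqrt (V * (eps^-1 - 1)) < Y i then w i else 0) <= eps.
Proof.
move=> w0 w1 wY VE e0 e1.
have V0 : 0 <= V by rewrite VE; apply: sum_ge0_range => j hj; apply: mulr_ge0;
  [apply: w0; slia | apply: sqr_ge0].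
have ei : 0 < eps^-1 - 1 by rewrite subr_gt0 invf_gt1.
set f := Num.sqrt _.
case: (eqVneq V 0) => [V00|Vn0].
  have f0 : f = 0 by rewrite /f V00 mul0r sqrtr0.
  rewrite (le_trans _ (ltW e0)) //.
  apply: (le_trans (ler_sum_range (G := fun=> 0) _)); first last.
    by rewrite big1_eq.
  move=> j hj; rewrite f0; case: ifP => // Yj.
  have := @term_le_sum _ (fun i => w i * Y i ^+ 2) 1 d.+1 j.
  rewrite -VE V00 => /(_ (fun i hi => mulr_ge0 (w0 i (ltac:(slia))) (sqr_ge0 _)) hj) H.
  have H0 : w j * Y j ^+ 2 = 0 by apply/eqP; rewrite eq_le H mulr_ge0 ?sqr_ge0 //; apply: w0; slia.
  move/eqP: H0; rewrite mulf_eq0 sqrf_eq0 (gt_eqF Yj) orbF => /eqP->.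
  by [].
have Vp : 0 < V by rewrite lt_neqAle eq_sym Vn0.
have fp : 0 < f by rewrite /f sqrtr_gt0 mulr_gt0.
have ff : f ^+ 2 = V * (eps^-1 - 1) by rewrite /f sqr_sqrtr // mulr_ge0 // ltW.
set u := V / f.
have up : 0 < u by rewrite divr_gt0.
set P := \sum_(1 <= i < d.+1) _.
have H1 : P * (f + u) ^+ 2 <= V + u ^+ 2.
  have -> : V + u ^+ 2 = \sum_(1 <= i < d.+1) w i * (Y i + u) ^+ 2.
    rewrite (eq_sum_range (G := fun i => w i * Y i ^+ 2 + (2 * u * (w i * Y i) + u ^+ 2 * w i))); last first.
      by move=> j _; ring.
    rewrite big_split big_split /= -!mulr_sumr wY w1 -VE; ring.
  rewrite /P mulr_suml; apply: ler_sum_range => j hj.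
  case: ifP => Yj; last by rewrite mul0r mulr_ge0 ?sqr_ge0 //; apply: w0; slia.
  apply: ler_wpM2l; first by apply: w0; slia.
  rewrite ler_sqr ?nnegrE; [by rewrite lerD2r ltW | by rewrite ltW ?addr_gt0 | ].
  by rewrite addr_ge0 // ltW // (lt_trans fp).
have key : eps * f ^+ 2 = V * (1 - eps) by rewrite ff; field; rewrite gt_eqF.
have fn0 : f != 0 by rewrite gt_eqF.
have E1 : V + u ^+ 2 = V * (f ^+ 2 + V) / f ^+ 2 by rewrite /u; field.
have E2 : (f + u) ^+ 2 = (f ^+ 2 + V) ^+ 2 / f ^+ 2 by rewrite /u; field.
have E3 : V = eps * (f ^+ 2 + V) by lra.
have E4 : V + u ^+ 2 = eps * (f + u) ^+ 2.
  by rewrite E1 E2 {1}E3 expr2; field.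
rewrite E4 in H1.
by rewrite -(ler_pM2r (_ : 0 < (f + u) ^+ 2)) // exprn_gt0 // addr_gt0.
Qed.

End B.

Lemma head_filter_iota (P : pred nat) a n : (exists j, (a <= j < a + n)%N /\ P j) ->
  let h := head 0%N [seq j <- iota a n | P j] in
  [/\ (a <= h < a + n)%N, P h & forall j, (a <= j < a + n)%N -> P j -> (h <= j)%N].
Proof.
elim: n a => [|n IH] a [j [hj Pj]] /=; first slia.
case: ifP => Pa /=.
  by split => //; [slia | move=> i hi _; slia].
have [|h1 h2 h3] := IH a.+1.
  exists j; split => //; case: (eqVneq j a) => [ja|]; first by rewrite -ja Pj in Pa.
  move=> ja; slia.
split => //; first slia.
move=> i hi Pi; case: (eqVneq i a) => [ia|ia]; first by rewrite -ia Pi in Pa.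
apply: h3 => //; slia.
Qed.

Lemma last_filter_iota (P : pred nat) a n : (exists j, (a <= j < a + n)%N /\ P j) ->
  let l := last 0%N [seq j <- iota a n | P j] in
  [/\ (a <= l < a + n)%N, P l & forall j, (a <= j < a + n)%N -> P j -> (j <= l)%N].
Proof.
elim: n => [|n IH] [j [hj Pj]]; first slia.
rewrite (_ : iota a n.+1 = rcons (iota a n) (a + n)%N); last first.
  by rewrite -cats1 -(addn1 n) iotaD.
rewrite filter_rcons.
case: ifP => Pa /=.
  by rewrite last_rcons; split => //; [slia | move=> i hi _; slia].
have [|h1 h2 h3] := IH.
  exists j; split => //; case: (eqVneq j (a + n)%N) => [ja|]; first by rewrite -ja Pj in Pa.
  move=> ja; slia.
split => //; first slia.
move=> i hi Pi; case: (eqVneq i (a + n)%N) => [ia|ia]; first by rewrite -ia Pi in Pa.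
apply: h3 => //; slia.
Qed.


Section Logs.
Variable R : realType.

Lemma ln2_gt0 : 0 < ln (2 : R).
Proof. by apply: ln_gt0; rewrite ltr1n. Qed.

Lemma powR2E (y : R) : powR 2 y = expR (y * ln 2).
Proof. by rewrite /powR pnatr_eq0. Qed.

Lemma ratio_lt (a b y : R) : 0 < a -> 0 < b ->
  (a < powR 2 y * b) = (log2 a - log2 b < y).
Proof.
move=> a0 b0.
rewrite powR2E -ltr_pdivrMr // -[a / b]lnK ?posrE ?divr_gt0 // ltr_expR.
rewrite ln_div ?posrE // /log2 -mulrBl ltr_pdivrMr //; exact: ln2_gt0.
Qed.

Lemma ratio_gt (a b y : R) : 0 < a -> 0 < b ->
  (powR 2 y * b < a) = (y < log2 a - log2 b).
Proof.
move=> a0 b0.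
rewrite powR2E -ltr_pdivlMr // -[a / b]lnK ?posrE ?divr_gt0 // ltr_expR.
rewrite ln_div ?posrE // /log2 -mulrBl ltr_pdivlMr //; exact: ln2_gt0.
Qed.

Lemma powR2_ge1 (y : R) : 0 <= y -> 1 <= powR 2 y.
Proof.
move=> y0; rewrite powR2E (le_trans _ (expR_ge1Dx _)) // lerDl mulr_ge0 //.
exact/ltW/ln2_gt0.
Qed.

Lemma gibbs d (p s : nat -> R) : (forall i, (1 <= i <= d)%N -> 0 <= p i) ->
  \sum_(1 <= i < d.+1) p i = 1 -> (forall i, (1 <= i <= d)%N -> 0 < s i) ->
  \sum_(1 <= i < d.+1) s i = 1 -> 0 <= relent d p s.
Proof.
move=> p0 p1 s0 s1.
have l2 := ln2_gt0.
apply: (@le_trans _ _ (\sum_(1 <= i < d.+1) ((p i - s i) / ln 2))).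
  by rewrite -mulr_suml sumrB p1 s1 subrr mul0r.
apply: ler_sum_range => i hi.
have si : 0 < s i by apply: s0; slia.
case: ifP => [/eqP->|pn].
  by rewrite sub0r mulNr oppr_le0 divr_ge0 // ltW.
have pi : 0 < p i by rewrite lt_neqAle eq_sym pn p0 //; slia.
rewrite /log2 -mulrBl mulrA ler_pM2r ?invr_gt0 //.
have := expR_ge1Dx (ln (s i / p i)).
rewrite lnK ?posrE ?divr_gt0 // ln_div ?posrE // => H.
have : 1 - s i / p i <= ln (p i) - ln (s i) by lra.
move=> h; have := ler_wpM2l (ltW pi) h; rewrite mulrBr mulr1 mulrCA divff ?gt_eqF // mulr1; exact.
Qed.

End Logs.

Section C.
Variable R : realType.
Variables (d : nat) (p s : nat -> R) (eps : R).
Hypothesis d1 : (1 <= d)%N.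
Hypothesis p0 : forall i, (1 <= i <= d)%N -> 0 <= p i.
Hypothesis p1 : \sum_(1 <= i < d.+1) p i = 1.
Hypothesis s0 : forall i, (1 <= i <= d)%N -> 0 < s i.
Hypothesis s1 : \sum_(1 <= i < d.+1) s i = 1.
Hypothesis srt : forall i, (1 <= i < d)%N -> p i.+1 / s i.+1 <= p i / s i.
Hypothesis e0 : 0 < eps.
Hypothesis e1 : eps < 1.

Lemma split_from (F : nat -> R) {a} m {b} : (a <= m <= b)%N ->
  \sum_(a <= i < b) F i = \sum_(a <= i < m) F i + \sum_(m <= i < b) F i.
Proof. by move=> /andP[h1 h2]; rewrite (@big_cat_nat _ _ _ m). Qed.

Lemma big0_range (F : nat -> R) a b : (forall j, (a <= j < b)%N -> F j = 0) ->
  \sum_(a <= j < b) F j = 0.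
Proof. by move=> H; rewrite (eq_sum_range H) big1_eq. Qed.

Lemma Q1 : sum_from d p 1 = 1.
Proof. exact: p1. Qed.

Lemma QS n : (1 <= n <= d)%N -> sum_from d p n = p n + sum_from d p n.+1.
Proof. by move=> h; rewrite /sum_from big_ltn //; slia. Qed.

Lemma Qge0 n : (1 <= n)%N -> 0 <= sum_from d p n.
Proof. by move=> h; apply: sum_ge0_range => j hj; apply: p0; slia. Qed.

Lemma steep_facts :
  [/\ forall i, (1 <= i <= d)%N -> 0 <= steep d p eps i,
      \sum_(1 <= i < d.+1) steep d p eps i = 1 &
      forall i, (1 <= i <= d)%N -> 0 < steep d p eps i -> eps < sum_from d p i].
Proof.
rewrite /steep; have [H|H] := boolP (eps <= 1 - p 1%N); last first.
  split.
  - by move=> i _; case: ifP.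
  - rewrite big_ltn //= [X in _ + X = _]big0_range ?addr0 // => j hj.
    by have -> : (j == 1)%N = false by apply/eqP; slia.
  - move=> i hi; case: ifP => [/eqP -> _|]; last by rewrite ltxx.
    by rewrite Q1.
have d2 : (2 <= d)%N.
  case: (ltnP 1 d) => // hd; have dd : d = 1%N by slia.
  move: H p1; rewrite dd big_nat1 => H E; rewrite E subrr in H.
  by move: (lt_le_trans e0 H); rewrite ltxx.
have [h1 h2 h3] : [/\ (2 <= steepR d p eps < 2 + d.-1)%N,
    eps <= sum_from d p (steepR d p eps) &
    forall j, (2 <= j < 2 + d.-1)%N -> eps <= sum_from d p j -> (j <= steepR d p eps)%N].
  apply: (@last_filter_iota (fun r => eps <= sum_from d p r)).
  exists 2%N; split; first slia.
  have := @QS 1%N (ltac:(slia)); rewrite Q1 => E.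
  by rewrite /= (_ : sum_from d p 2 = 1 - p 1) // E addrC addKr.
move: h1 h2 h3; set Rr := steepR d p eps => h1 h2 h3; clearbody Rr.
have Rd : (2 <= Rr <= d)%N by slia.
have hr : sum_from d p Rr.+1 < eps.
  case: (ltnP Rr d) => hR.
    rewrite ltNge; apply/negP => Hc; have := h3 Rr.+1 (ltac:(slia)) Hc; slia.
  by rewrite /sum_from big_geq //; slia.
have QR := @QS Rr (ltac:(slia)).
set r := sum_from d p Rr.+1 in hr QR *.
have r0 : 0 <= r by apply: Qge0.
have splitQ : forall i, (1 <= i <= Rr)%N ->
    sum_from d p i = \sum_(i <= j < Rr) p j + sum_from d p Rr.
  by move=> i hi; rewrite /sum_from (split_from _ Rr) //; slia.
split.
- move=> i hi; case: ifP => _; first by rewrite addr_ge0 ?(ltW e0) ?p0.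
  case: ifP => _; first by apply: p0.
  case: ifP => _ //; lra.
- rewrite big_ltn // eqxx (split_from _ Rr) ?Rd //=; last slia.
  rewrite (@big_ltn _ _ _ Rr d.+1); last slia.
  rewrite eqxx ltnn [X in _ + (_ + (_ + X))]big0_range; last first.
    move=> j hj; have -> : (j == 1)%N = false by apply/eqP; slia.
    have -> : (j < Rr)%N = false by apply/negbTE; rewrite -leqNgt; slia.
    by have -> : (j == Rr)%N = false by apply/eqP; slia.
  rewrite (eq_sum_range (G := p)); last first.
    move=> j hj; have -> : (j == 1)%N = false by apply/eqP; slia.
    by have -> : (j < Rr)%N by slia.
  have := splitQ 2%N (ltac:(slia)); have := @QS 1%N (ltac:(slia)); rewrite Q1.
  have -> : (Rr == 1)%N = false by apply/eqP; slia.
  lra.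
- move=> i hi; case: ifP => [/eqP-> _|i1]; first by rewrite Q1.
  case: ifP => iR.
    move=> pi; rewrite (splitQ i); last slia.
    rewrite (@big_ltn _ _ _ i Rr); last slia.
    have : 0 <= \sum_(i.+1 <= j < Rr) p j by apply: sum_ge0_range => j hj; apply: p0; slia.
    lra.
  case: ifP => [/eqP->|]; last by rewrite ltxx.
  lra.
Qed.


Lemma ratio_mono i j : (1 <= i <= j)%N -> (j <= d)%N -> p j / s j <= p i / s i.
Proof. move=> h1 h2; exact: (sorted_trans srt h1 h2). Qed.

Lemma tail_bound c (T : nat -> bool) i :
  (forall j, (1 <= j <= d)%N -> 0 < p j -> p j < c * s j -> T j) ->
  (1 <= i <= d)%N -> p i < c * s i ->
  sum_from d p i <= \sum_(1 <= j < d.+1) (if T j then p j else 0).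
Proof.
move=> HT hi hpi.
rewrite (split_from _ i); last slia.
rewrite -[X in X <= _]add0r; apply: lerD.
  by apply: sum_ge0_range => j hj; case: ifP => // _; apply: p0; slia.
apply: ler_sum_range => j hj.
case: ifP => // Tj.
rewrite leNgt; apply/negP => pj.
have sj : 0 < s j by apply: s0; slia.
have si : 0 < s i by apply: s0; slia.
have : p j / s j < c.
  apply: le_lt_trans (@ratio_mono i j (ltac:(slia)) (ltac:(slia))) _.
  by rewrite ltr_pdivrMr.
rewrite ltr_pdivrMr // => H.
by rewrite (HT j) // in Tj; slia.
Qed.

Lemma head_bound c (T : nat -> bool) m : 0 <= c ->
  (forall j, (1 <= j <= d)%N -> 0 < p j -> c * s j < p j -> T j) ->
  (m <= d)%N ->
  sum_to p m <= \sum_(1 <= j < d.+1) (if T j then p j else 0) + c * sum_to s m.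
Proof.
move=> c0 HT hm.
have Hs : forall j, (1 <= j <= d)%N -> 0 <= c * s j.
  by move=> j hj; rewrite mulr_ge0 // ltW // s0.
apply: (@le_trans _ _ (\sum_(1 <= j < m.+1) ((if T j then p j else 0) + c * s j))).
  apply: ler_sum_range => j hj.
  case: ifP => Tj; first by rewrite lerDl Hs //; slia.
  rewrite add0r; case: (lerP (p j) 0) => pj; first by rewrite (le_trans pj) // Hs //; slia.
  rewrite leNgt; apply/negP => H; by rewrite (HT j) // in Tj; slia.
rewrite big_split /= -mulr_sumr lerD2r.
rewrite [X in _ <= X](split_from _ m.+1); last slia.
rewrite lerDl.
by apply: sum_ge0_range => j hj; case: ifP => // _; apply: p0; slia.
Qed.


Lemma flat_facts c : 1 <= c ->
  (forall m, (m <= d)%N -> sum_to p m <= eps + c * sum_to s m) ->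
  [/\ forall i, (1 <= i <= d)%N -> 0 <= flat d p s eps i,
      \sum_(1 <= i < d.+1) flat d p s eps i = 1 &
      forall i, (1 <= i <= d)%N -> flat d p s eps i <= c * s i].
Proof.
move=> c1 HB.
have ST : forall m, (m <= d)%N -> sum_to s m + sum_from d s m.+1 = 1.
  by move=> m hm; rewrite -s1 /sum_to /sum_from [in RHS](split_from _ m.+1) //; slia.
have PT : forall m, (m <= d)%N -> sum_to p m + sum_from d p m.+1 = 1.
  by move=> m hm; rewrite -p1 /sum_to /sum_from [in RHS](split_from _ m.+1) //; slia.
rewrite /flat; have [Ht|Ht] := boolP (trdist d p s < eps).
  split => [i hi|//|i hi]; first exact/ltW/s0.
  by have := s0 i hi; nra.
rewrite -leNgt in Ht.
have [|K [K1 K2 K3]] := @exists_last (fun i => s i < p i) 1 d.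
  apply/not_existsP => /= H.
  have pls : forall j, (1 <= j <= d)%N -> p j <= s j.
    by move=> j hj; rewrite leNgt; apply/negP => hh; apply: (H j); split.
  have : trdist d p s = 0.
    rewrite /trdist (eq_sum_range (G := fun j => s j - p j)); last first.
      by move=> j hj; rewrite ler0_norm ?opprB // subr_le0 pls.
    by rewrite sumrB s1 p1 subrr mulr0.
  by move=> E; rewrite E in Ht; move: (lt_le_trans e0 Ht); rewrite ltxx.
have pgt : forall j, (1 <= j <= K)%N -> s j < p j.
  move=> j hj; have := @ratio_mono j K (ltac:(slia)) (ltac:(slia)).
  have sK : 0 < s K by apply: s0; slia.
  have sj : 0 < s j by apply: s0; slia.
  have : 1 < p K / s K by rewrite ltr_pdivlMr // mul1r.
  move=> h1 h2; have := lt_le_trans h1 h2; by rewrite ltr_pdivlMr // mul1r.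
have ple : forall j, (K < j <= d)%N -> p j <= s j.
  by move=> j hj; rewrite leNgt; apply: K3.
have Kd : (K < d)%N.
  case: (ltnP K d) => // hK.
  have : p d - s d <= \sum_(1 <= j < d.+1) (p j - s j).
    apply: (@term_le_sum _ (fun j => p j - s j)); last slia.
    by move=> j hj; rewrite subr_ge0 ltW // pgt //; slia.
  rewrite sumrB p1 s1 subrr => H.
  have := pgt d (ltac:(slia)); lra.
have TD : trdist d p s = sum_to p K - sum_to s K.
  rewrite /trdist (split_from _ K.+1); last slia.
  rewrite (eq_sum_range (G := fun j => p j - s j)); last first.
    by move=> j hj; rewrite ger0_norm // subr_ge0 ltW // pgt //; slia.
  rewrite [X in _ * (_ + X)](eq_sum_range (G := fun j => s j - p j)); last first.
    by move=> j hj; rewrite ler0_norm ?opprB // subr_le0 ple //; slia.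
  rewrite !sumrB.
  have := PT K (ltnW Kd); have := ST K (ltnW Kd).
  rewrite /sum_to /sum_from => h1 h2; lra.
have sK1 : 0 < s K.+1 by apply: s0; slia.
have sK : 0 < s K by apply: s0; slia.
have SK0 : 0 <= sum_to s K by apply: sum_ge0_range => j hj; apply/ltW/s0; slia.
have ZK0 : 0 <= sum_from d s K.+1 by apply: sum_ge0_range => j hj; apply/ltW/s0; slia.
have cM : condM p s eps K.
  rewrite /condM.
  have r1 : p K.+1 / s K.+1 <= 1 by rewrite ler_pdivrMr // mul1r ple //; slia.
  have := ler_wpM2r SK0 r1; rewrite mul1r => h.
  lra.
have cN : condN d p s eps K.+1.
  rewrite /condN /=.
  have r1 : 1 <= p K / s K by rewrite ler_pdivlMr // mul1r ltW // pgt //; slia.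
  have := ler_wpM2r ZK0 r1; rewrite mul1r => h.
  have := PT K (ltnW Kd); have := ST K (ltnW Kd).
  lra.
have d2 : (1 + d.-1 = d)%N by slia.
have [hM1 hM2 hM3] : [/\ (1 <= flatM d p s eps < 1 + d.-1)%N,
    condM p s eps (flatM d p s eps) &
    forall j, (1 <= j < 1 + d.-1)%N -> condM p s eps j -> (flatM d p s eps <= j)%N].
  by apply: (@head_filter_iota (condM p s eps)); exists K; split => //; slia.
have [hN1 hN2 hN3] : [/\ (2 <= flatN d p s eps < 2 + d.-1)%N,
    condN d p s eps (flatN d p s eps) &
    forall j, (2 <= j < 2 + d.-1)%N -> condN d p s eps j -> (j <= flatN d p s eps)%N].
  by apply: (@last_filter_iota (condN d p s eps)); exists K.+1; split => //; slia.
rewrite /=.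
move: hM1 hM2 hM3 hN1 hN2 hN3; set M := flatM d p s eps; set N := flatN d p s eps.
move=> hM1 hM2 hM3 hN1 hN2 hN3; clearbody M N.
have MK : (M <= K)%N by apply: hM3 => //; slia.
have KN : (K < N)%N by have := hN3 K.+1 (ltac:(slia)) cN; slia.
have SM : 0 < sum_to s M.
  apply: lt_le_trans (s0 1 (ltac:(slia))) _.
  by apply: (@term_le_sum _ s 1 M.+1 1) => [j hj|]; [apply/ltW/s0 | ]; slia.
have ZN : 0 < sum_from d s N.
  apply: lt_le_trans (s0 N (ltac:(slia))) _.
  by apply: (@term_le_sum _ s N d.+1 N) => [j hj|]; [apply/ltW/s0 | ]; slia.
have QN : 0 <= sum_from d p N by apply: Qge0; slia.
set T := (sum_to p M - eps) / sum_to s M.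
set B := (sum_from d p N + eps) / sum_from d s N.
have sM1 : 0 < s M.+1 by apply: s0; slia.
have TM : p M.+1 / s M.+1 <= T by rewrite /T ler_pdivlMr //; move: hM2; rewrite /condM; lra.
have rM0 : 0 <= p M.+1 / s M.+1 by rewrite divr_ge0 ?p0 // ?ltW //; slia.
have Tc : T <= c by rewrite /T ler_pdivrMr //; have := HB M (ltac:(slia)); lra.
have BN : B <= p N.-1 / s N.-1 by rewrite /B ler_pdivrMr //; move: hN2; rewrite /condN; lra.
have B0 : 0 <= B by rewrite /B divr_ge0 // ?addr_ge0 // ?ltW.
have Bc : B <= c.
  case: (eqVneq N K.+1) => [NK|NK].
    apply: (le_trans _ c1); rewrite /B ler_pdivrMr // mul1r NK.
    have := PT K (ltnW Kd); have := ST K (ltnW Kd); lra.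
  apply: (le_trans BN); apply: (le_trans _ Tc); apply: (le_trans _ TM).
  apply: ratio_mono; slia.
split.
- move=> i hi; case: ifP => _; first by rewrite mulr_ge0 ?(le_trans rM0 TM) // ltW // s0.
  by case: ifP => _; [rewrite mulr_ge0 // ltW // s0 | apply: p0].
- rewrite (split_from _ M.+1) ?[X in _ + X](split_from _ N); try slia.
  rewrite (eq_sum_range (G := fun i => s i * T)); last by move=> j hj; rewrite ifT //; slia.
  rewrite [X in _ + (X + _)](eq_sum_range (G := p)); last first.
    by move=> j hj; rewrite ifF ?ifF //; apply/negbTE; rewrite -ltnNge; slia.
  rewrite [X in _ + (_ + X)](eq_sum_range (G := fun i => s i * B)); last first.
    by move=> j hj; rewrite ifF ?ifT //; [slia | apply/negbTE; rewrite -ltnNge; slia].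
  rewrite -!mulr_suml.
  have -> : sum_to s M * T = sum_to p M - eps.
    by rewrite /T mulrC divfK // gt_eqF.
  have -> : sum_from d s N * B = sum_from d p N + eps.
    by rewrite /B mulrC divfK // gt_eqF.
  have := p1; rewrite (split_from _ M.+1) ?[X in _ + X](split_from _ N); try slia.
  rewrite /sum_to /sum_from; lra.
- move=> i hi; case: ifP => iM.
    by rewrite mulrC ler_wpM2r // ltW // s0.
  case: ifP => iN; first by rewrite mulrC ler_wpM2r // ltW // s0.
  have si : 0 < s i by apply: s0.
  move/negbT: iM; rewrite -ltnNge => iM.
  move/negbT: iN; rewrite -ltnNge => iN.
  have : p i / s i <= c.
    apply: (le_trans _ Tc); apply: (le_trans _ TM); apply: ratio_mono; slia.
  by rewrite ler_pdivrMr.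
Qed.


Lemma main_sec :
  let r_st := powR 2 (relent d p s - fsig d p s eps) in
  let r_fl := powR 2 (relent d p s + fsig d p s eps) in
  (forall pi, lorenz_order d (steep d p eps) s pi ->
     forall x, 0 <= x <= 1 -> ell r_st x <= lorenz d (steep d p eps) s pi x) /\
  (forall pi, lorenz_order d (flat d p s eps) s pi ->
     forall x, 0 <= x <= 1 -> lorenz d (flat d p s eps) s pi x <= ell r_fl x).
Proof.
move=> r_st r_fl.
set Sr := relent d p s.
set f := fsig d p s eps.
set X := fun i => log2 (p i) - log2 (s i).
set YA := fun i => if p i == 0 then 0 else Sr - X i.
set YB := fun i => if p i == 0 then 0 else X i - Sr.
have pS : \sum_(1 <= i < d.+1) (if p i == 0 then 0 else p i) = 1.
  by rewrite -p1; apply: eq_sum_range => j _; case: ifP => // /eqP ->.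
have hA1 : \sum_(1 <= i < d.+1) p i * YA i = 0.
  rewrite (eq_sum_range (G := fun i => Sr * (if p i == 0 then 0 else p i)
     - (if p i == 0 then 0 else p i * (log2 (p i) - log2 (s i))))); last first.
    by move=> j _; rewrite /YA /X; case: ifP => _; [rewrite mulr0 mulr0 subrr | ring].
  by rewrite sumrB -mulr_sumr pS mulr1 subrr.
have hB1 : \sum_(1 <= i < d.+1) p i * YB i = 0.
  rewrite (eq_sum_range (G := fun i => - (p i * YA i))); last first.
    by move=> j _; rewrite /YA /YB; case: ifP => _; [rewrite !mulr0 oppr0 | ring].
  by rewrite sumrN hA1 oppr0.
have hA2 : relvar d p s = \sum_(1 <= i < d.+1) p i * YA i ^+ 2.
  rewrite (eq_sum_range (G := fun i =>
     (if p i == 0 then 0 else p i * (log2 (p i) - log2 (s i)) ^+ 2)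
     - 2 * Sr * (if p i == 0 then 0 else p i * (log2 (p i) - log2 (s i)))
     + Sr ^+ 2 * (if p i == 0 then 0 else p i))); last first.
    move=> j _; rewrite /YA /X; case: ifP => _; last by ring.
    by rewrite !mulr0 subrr addr0 expr0n mulr0.
  rewrite big_split sumrB /= -!mulr_sumr pS /relvar -/Sr.
  have ES : \sum_(1 <= i < d.+1) (if p i == 0 then 0 else p i * (log2 (p i) - log2 (s i))) = Sr by [].
  rewrite ES; ring.
have hB2 : relvar d p s = \sum_(1 <= i < d.+1) p i * YB i ^+ 2.
  rewrite hA2; apply: eq_sum_range => j _; rewrite /YA /YB.
  by case: ifP => _ //; ring.
have CA := @cantelli_fin R p YA d eps (relvar d p s) p0 p1 hA1 hA2 e0 e1.
have CB := @cantelli_fin R p YB d eps (relvar d p s) p0 p1 hB1 hB2 e0 e1.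
rewrite -/(fsig d p s eps) -/f in CA CB.
have f0 : 0 <= f by apply: sqrtr_ge0.
have S0 : 0 <= Sr by apply: gibbs.
have rst0 : 0 < r_st by apply: powR_gt0.
have rfl1 : 1 <= r_fl by apply: powR2_ge1; exact: addr_ge0.
have KA : forall j, (1 <= j <= d)%N -> 0 < p j -> p j < r_st * s j -> f < YA j.
  move=> j hj pj; rewrite /r_st ratio_lt //; last by apply: s0.
  by rewrite /YA (gt_eqF pj) /X /Sr /f; lra.
have KB : forall j, (1 <= j <= d)%N -> 0 < p j -> r_fl * s j < p j -> f < YB j.
  move=> j hj pj; rewrite /r_fl ratio_gt //; last by apply: s0.
  by rewrite /YB (gt_eqF pj) /X /Sr /f; lra.
split.
- move=> pi [[pr pinj] hsort] x hx.
  have [st0 st1 st2] := steep_facts.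
  have PP : perm_on_1d d pi by [].
  rewrite /ell.
  change (Num.min (r_st * x) 1 <= Lval (fun i => steep d p eps (pi i)) (fun i => s (pi i))
     (\sum_(1 <= j < d) nat_of_bool (Xs (fun i => s (pi i)) j <= x)%R)%N x).
  apply: (@lor_lower R _ _ (fun i => p (pi i))) => //.
  + by move=> i hi; apply: s0; apply: pr.
  + by rewrite /Xs (@sum_perm R s d pi PP).
  + by move=> i hi; apply: st0; apply: pr.
  + by rewrite /Xs (@sum_perm R (steep d p eps) d pi PP).
  + by move=> i hi; apply: p0; apply: pr.
  + by rewrite /Xs (@sum_perm R p d pi PP).
  + move=> i hi ui; have hj := pr i hi.
    rewrite leNgt; apply/negP => H; have h1 := st2 _ hj ui.
    have h2 : sum_from d p (pi i) <= eps.
      apply: le_trans CA; exact: (@tail_bound r_st (fun k => f < YA k)).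
    lra.
- move=> pi [[pr pinj] hsort] x hx.
  have HB : forall m, (m <= d)%N -> sum_to p m <= eps + r_fl * sum_to s m.
    move=> m hm; apply: (le_trans (@head_bound r_fl (fun k => f < YB k) m _ KB hm)).
      lra.
    by rewrite lerD2r.
  have [fl0 fl1 fl2] := @flat_facts r_fl rfl1 HB.
  have PP : perm_on_1d d pi by [].
  rewrite /ell.
  change (Lval (fun i => flat d p s eps (pi i)) (fun i => s (pi i))
     (\sum_(1 <= j < d) nat_of_bool (Xs (fun i => s (pi i)) j <= x)%R)%N x <= Num.min (r_fl * x) 1).
  apply: lor_upper => //.
  + by move=> i hi; apply: s0; apply: pr.
  + by rewrite /Xs (@sum_perm R s d pi PP).
  + by move=> i hi; apply: fl0; apply: pr.
  + by rewrite /Xs (@sum_perm R (flat d p s eps) d pi PP).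
  + by move=> i hi; apply: fl2; apply: pr.
Qed.

End C.

Theorem lemma7 (R : realType) (d : nat) (p s : nat -> R) (eps : R) :
  (1 <= d)%N ->
  (forall i, (1 <= i <= d)%N -> 0 <= p i) ->
  \sum_(1 <= i < d.+1) p i = 1 ->
  (forall i, (1 <= i <= d)%N -> 0 < s i) ->
  \sum_(1 <= i < d.+1) s i = 1 ->
  (forall i, (1 <= i < d)%N -> p i.+1 / s i.+1 <= p i / s i) ->
  0 < eps -> eps < 1 ->
  let r_st := powR 2 (relent d p s - fsig d p s eps) in
  let r_fl := powR 2 (relent d p s + fsig d p s eps) in
  (forall pi, lorenz_order d (steep d p eps) s pi ->
     forall x, 0 <= x <= 1 -> ell r_st x <= lorenz d (steep d p eps) s pi x) /\
  (forall pi, lorenz_order d (flat d p s eps) s pi ->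
     forall x, 0 <= x <= 1 -> lorenz d (flat d p s eps) s pi x <= ell r_fl x).
Proof.
move=> d1 p0 p1 s0 s1 srt e0 e1.
by apply: main_sec.
Qed.
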